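(* Let $(\Gamma(-),X)$ be a finite graph of finite groups with fundamental group $\Gamma=\pi_1(\Gamma(-),X)$, and let $T$ be a maximal (spanning) tree of $X$ such that \[ \Gamma(e)^e\neq\Gamma(t(e))\quad\text{and}\quad\Gamma(e)^{\bar e}\neq\Gamma(o(e))\qquad\text{for all } e\in E(T). \] Then the number $|E(X)|$ of (directed) edges of $X$ satisfies $|E(X)|\le 2\mu(\Gamma)$.
   Context: Graphs are in the sense of Serre: vertex set $V(X)$, set $E(X)$ of directed edges with fixed-point-free involution $e\mapsto\bar e$, maps $o,t:E(X)\to V(X)$ with $t(\bar e)=o(e)$. A graph of groups assigns groups $\Gamma(v)$, $\Gamma(e)=\Gamma(\bar e)$ and monomorphisms $\Gamma(e)\to\Gamma(t(e))$, $a\mapsto a^e$; $\Gamma(e)^e\le\Gamma(t(e))$ and $\Gamma(e)^{\bar e}\le\Gamma(o(e))$ denote the images. $\Gamma$ is then a finitely generated virtually free group. Let $m_\Gamma$ be the least common multiple of the orders of the finite subgroups of $\Gamma$ (equivalently $\operatorname{lcm}\{|\Gamma(v)|:v\in V(X)\}$). The free rank $\mu(\Gamma)$ is the rank of a free subgroup of index $m_\Gamma$ in $\Gamma$; equivalently $\mu(\Gamma)=1-m_\Gamma\chi(\Gamma)$ where $\chi(\Gamma)=\sum_{v\in V(X)}|\Gamma(v)|^{-1}-\sum_{e\in\mathcal O(X)}|\Gamma(e)|^{-1}$ for any orientation $\mathcal O(X)$ (one edge chosen from each pair $\{e,\bar e\}$). *)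

(* Defs.v *)
From HB Require Import structures.
From mathcomp Require Import all_boot all_order all_fingroup all_algebra.
Import Order.TTheory GRing.Theory Num.Theory.

(* A finite graph in the sense of Serre: vertices, directed edges with a
   fixed-point-free involution e |-> bar e, origin map o; t e := o (bar e). *)
Record graph := Graph {
  vert : finType;
  edge : finType;
  bar : edge -> edge;
  org : edge -> vert;
  barK : involutive bar;
  bar_nofix : forall e, bar e != e }.

Arguments bar {_}. Arguments org {_}.
Definition term (X : graph) (e : edge X) : vert X := org (bar e).

Record gog (X : graph) := GoG {
  VG : vert X -> finGroupType;
  EG : edge X -> finGroupType;
  EG_bar : forall e, EG (bar e) = EG e;
  mono : forall e, EG e -> VG (org (bar e));
  mono_morph : forall e (x y : EG e), mono e (x * y)%g = (mono e x * mono e y)%g;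
  mono_inj : forall e, injective (mono e) }.

Set Implicit Arguments. Unset Strict Implicit. Unset Printing Implicit Defensive.
Arguments term {_}. Arguments VG {_}. Arguments EG {_}. Arguments mono {_} _ _.

(* Gamma(e)^e as a subset of Gamma(t(e)) *)
Definition edge_image (X : graph) (G : gog X) (e : edge X) : {set VG G (term e)} :=
  [set mono G e x | x in [set: EG G e]].

Fixpoint walk_from (X : graph) (u : vert X) (p : seq (edge X)) : bool :=
  match p with
  | [::] => true
  | e :: p' => (org e == u) && walk_from (term e) p'
  end.

Fixpoint walk_end (X : graph) (u : vert X) (p : seq (edge X)) : vert X :=
  match p with
  | [::] => u
  | e :: p' => walk_end (term e) p'
  end.

Definition reduced (X : graph) (p : seq (edge X)) : bool :=
  sorted (fun e f => f != bar e) p.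

Definition connected_in (X : graph) (S : {set edge X}) : Prop :=
  forall u v : vert X, exists p : seq (edge X),
    [&& all (fun e => e \in S) p, walk_from u p & walk_end u p == v].

Definition acyclic_in (X : graph) (S : {set edge X}) : Prop :=
  forall (u : vert X) (p : seq (edge X)),
    p != [::] -> all (fun e => e \in S) p -> walk_from u p -> reduced p ->
    walk_end u p != u.

Definition spanning_tree (X : graph) (S : {set edge X}) : Prop :=
  [/\ forall e, (bar e \in S) = (e \in S),
      (0 < #|vert X|)%N,
      connected_in S &
      acyclic_in S].

Definition m_Gamma (X : graph) (G : gog X) : nat :=
  \big[lcmn/1%N]_(v : vert X) #|VG G v|.

Definition orient (X : graph) (e : edge X) : bool :=
  (enum_rank e < enum_rank (bar e))%N.

Definition chi_Gamma (X : graph) (G : gog X) : rat :=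
  (\sum_(v : vert X) (#|VG G v|%:R)^-1
   - \sum_(e : edge X | orient e) (#|EG G e|%:R)^-1)%R.

Definition mu_Gamma (X : graph) (G : gog X) : rat :=
  (1 - (m_Gamma G)%:R * chi_Gamma G)%R.

(* Main.v *)
Require Import Defs.
From HB Require Import structures.
From mathcomp Require Import all_boot all_order all_fingroup all_algebra.
Import Order.TTheory GRing.Theory Num.Theory.
Set Implicit Arguments. Unset Strict Implicit.

Lemma walk_from_cat (X : graph) (u : vert X) (q s : seq (edge X)) :
  walk_from u (q ++ s) = walk_from u q && walk_from (walk_end u q) s.
Proof. by elim: q u => [|e q IH] u //=; rewrite IH andbA. Qed.

Lemma walk_end_cat (X : graph) (u : vert X) (q s : seq (edge X)) :
  walk_end u (q ++ s) = walk_end (walk_end u q) s.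
Proof. by elim: q u => [|e q IH] u //=. Qed.

Lemma m_gt0 (X : graph) (G : gog X) : (0 < m_Gamma G)%N.
Proof.
rewrite /m_Gamma; apply: (big_ind (fun n => 0 < n)%N) => //.
  by move=> a b; rewrite lcmn_gt0 => -> ->.
by move=> v _; apply/card_gt0P; exists 1%g.
Qed.

Lemma gv_dvd (X : graph) (G : gog X) v : (#|VG G v| %| m_Gamma G)%N.
Proof. by apply: (biglcmn_sup v). Qed.

Lemma ge_le (X : graph) (G : gog X) e : (#|EG G e| <= #|VG G (term e)|)%N.
Proof.
have -> : #|EG G e| = #|edge_image G e|.
  by rewrite /edge_image card_imset ?cardsT //; exact: (Defs.mono_inj _ G e).
by rewrite -cardsT; apply: subset_leq_card; apply: subsetT.
Qed.

Lemma ge_half (X : graph) (G : gog X) e :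
  edge_image G e != [set: VG G (term e)] ->
  (2 * #|EG G e| <= #|VG G (term e)|)%N.
Proof.
move=> Hne.
have H1 : mono G e 1%g = 1%g.
  have h := mono_morph _ G e 1%g 1%g; rewrite mulg1 in h.
  by apply: (mulgI (mono G e 1%g)); rewrite mulg1 -h.
have gs : group_set (edge_image G e).
  apply/andP; split.
    by apply/imsetP; exists 1%g; rewrite ?inE // H1.
  apply/subsetP => z /mulsgP [a b /imsetP [x _ ->] /imsetP [y _ ->] ->].
  by apply/imsetP; exists (x * y)%g; rewrite ?inE // mono_morph.
pose H := Group gs.
have cH : #|EG G e| = #|H|.
  by rewrite /= /edge_image card_imset ?cardsT //; exact: (Defs.mono_inj _ G e).
have hdv : (#|H| %| #|VG G (term e)|)%N.
  by rewrite -cardsT; apply: cardSg; apply: subsetT.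
have hlt : (#|H| < #|VG G (term e)|)%N.
  rewrite -cardsT; apply: proper_card; rewrite properEneq Hne; exact: subsetT.
rewrite cH; case/dvdnP: hdv => k hk; rewrite hk in hlt *.
case: k hk hlt => [|[|k]] hk hlt.
- by rewrite mul0n in hlt.
- by rewrite mul1n ltnn in hlt.
- by rewrite leq_mul2r; apply/orP; right.
Qed.

Lemma tree_dist (X : graph) (T : {set edge X}) (r : vert X) :
  connected_in T -> exists d : vert X -> nat, forall v, v != r ->
    exists2 e, e \in T & (term e == v) && (d (org e) < d v)%N.
Proof.
move=> Hc.
pose D u n := [exists p : n.-tuple (edge X),
   [&& all (fun e => e \in T) p, walk_from r p & walk_end r p == u]].
have exD : forall u, exists n, D u n.
  move=> u; have [p /and3P [h1 h2 h3]] := Hc r u.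
  exists (size p); apply/existsP; exists (in_tuple p); by rewrite /= h1 h2 h3.
exists (fun u => ex_minn (exD u)) => v nv.
case: ex_minnP => n /existsP [p /and3P [h1 h2 h3]] hmin.
have hne : (p : seq _) != [::].
  by apply/eqP => hp; move: h3; rewrite hp /= eq_sym (negbTE nv).
have [q [e hp]] : exists q e, (p : seq _) = rcons q e.
  move: hne; case/lastP: (p : seq _) => [|q e] //; by exists q, e.
rewrite hp in h1 h2 h3.
move: h2; rewrite -cats1 walk_from_cat /= andbT => /andP [hq he].
move: h1; rewrite all_rcons => /andP [heT hqT].
move: h3; rewrite -cats1 walk_end_cat /= => hv.
exists e => //; rewrite hv /=.
case: ex_minnP => n' _ hmin'.
have : (n' <= size q)%N.
  apply: hmin'; apply/existsP; exists (in_tuple q).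
  by rewrite /= hqT hq eq_sym.
move=> h; apply: (leq_ltn_trans h).
by rewrite -(size_tuple p) hp size_rcons.
Qed.
From mathcomp Require Import ring lra.
Local Open Scope ring_scope.

Lemma divle (m a b : nat) : (0 < a)%N -> (a <= b)%N -> (m%:R / b%:R <= m%:R / a%:R :> rat)%R.
Proof. move=> ha hab; apply: ler_wpM2l; first exact: ler0n.
by rewrite lef_pV2 ?posrE ?ltr0n ?ler_nat // (leq_trans ha hab). Qed.

Lemma div2le (m a b : nat) : (0 < a)%N -> (2 * a <= b)%N -> (2 * (m%:R / b%:R) <= m%:R / a%:R :> rat)%R.
Proof. move=> ha hab; have := @divle m (2 * a) b _ hab.
rewrite muln_gt0 ha natrM invfM => /(_ isT) h.
have -> : (m%:R / a%:R = 2 * (m%:R * ((2:nat)%:R^-1 * a%:R^-1)) :> rat)%R.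
  by field; rewrite pnatr_eq0 -lt0n.
lra. Qed.

Lemma orient_sum (X : graph) (h : edge X -> rat) :
  (forall e, h (bar e) = h e) ->
  (2 * \sum_(e | orient e) h e = \sum_e h e)%R.
Proof.
move=> hb; rewrite (bigID (@orient X) predT) /=.
have -> : (\sum_(e | true && ~~ orient e) h e = \sum_(e | true && orient e) h e)%R.
  rewrite (reindex_inj (inv_inj (@barK X))) /=.
  apply: eq_big => e; last by rewrite hb.
  rewrite /orient barK -leqNgt leq_eqVlt.
  rewrite (_ : (_ == _) = false) //.
  apply/negbTE/eqP => /val_inj/enum_rank_inj he.
  by move: (@bar_nofix X e); rewrite -he eqxx.
have -> : (\sum_(e | true && orient e) h e = \sum_(e | orient e) h e)%R.
  by apply: eq_bigl.
lra.
Qed.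

Theorem lemma5p1 (X : graph) (G : gog X) (T : {set edge X}) :
  spanning_tree T ->
  (forall e : edge X, e \in T ->
     edge_image G e != [set: VG G (term e)] /\
     edge_image G (bar e) != [set: VG G (term (bar e))]) ->
  ((#|edge X|)%:R <= 2 * mu_Gamma G :> rat)%R.
Proof.
move=> [_ hV Hc _] Hne.
set m := m_Gamma G.
pose x v : rat := m%:R / #|VG G v|%:R.
pose y e : rat := m%:R / #|EG G e|%:R.
have gvpos : forall v, (0 < #|VG G v|)%N by move=> v; apply/card_gt0P; exists 1%g.
have gepos : forall e, (0 < #|EG G e|)%N by move=> e; apply/card_gt0P; exists 1%g.
have gvm : forall v, (#|VG G v| <= m)%N.
  by move=> v; apply: dvdn_leq; [exact: m_gt0 | exact: gv_dvd].
have ex1 : forall v, 1 <= x v.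
  move=> v; rewrite /x ler_pdivlMr ?ltr0n // mul1r ler_nat; exact: gvm.
have ey1 : forall e, 1 <= y e.
  move=> e; rewrite /y ler_pdivlMr ?ltr0n // mul1r ler_nat.
  exact: (leq_trans (ge_le G e) (gvm (term e))).
have ey2 : forall e, e \in T -> 2 * x (term e) <= y e.
  move=> e eT; apply: div2le => //; apply: ge_half; exact: (Hne e eT).1.
have eyb : forall e, y (bar e) = y e by move=> e; rewrite /y (EG_bar _ G e).
have hmu : mu_Gamma G = 1 - \sum_v x v + \sum_(e | orient e) y e.
  rewrite /mu_Gamma /chi_Gamma mulrBr !mulr_sumr -/m.
  rewrite /x /y; lra.
have [v0 _] := card_gt0P hV.
pose r := [arg max_(v > v0) #|VG G v|].
have hr : forall v, (#|VG G v| <= #|VG G r|)%N.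
  by rewrite /r; case: arg_maxnP => // i _ hi v; apply: hi.
have hxr : forall v, x r <= x v by move=> v; apply: divle.
have [d hd] := tree_dist r Hc.
pose A := [set e in T | (d (org e) < d (term e))%N].
pose z e := y e - 1.
have S1 : 2 * \sum_(e in A) z e <= \sum_e z e.
  have zpos : forall e, 0 <= z e by move=> e; rewrite /z subr_ge0.
  rewrite (bigID (fun e => e \in A) predT) /=.
  have -> : \sum_(e | true && (e \in A)) z e = \sum_(e in A) z e by apply: eq_bigl.
  suff : \sum_(e in A) z e <= \sum_(e | true && (e \notin A)) z e by lra.
  rewrite [X in X <= _](reindex_inj (inv_inj (@barK X))) /=.
  rewrite [X in _ <= X](bigID (fun e => bar e \in A)) /=.
  have h0 : 0 <= \sum_(e | true && (e \notin A) && ~~ (bar e \in A)) z e.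
    by apply: sumr_ge0 => e _; exact: zpos.
  suff : \sum_(e | bar e \in A) z (bar e) = \sum_(e | true && (e \notin A) && (bar e \in A)) z e by lra.
  apply: eq_big => e; last by rewrite /z eyb.
  case hb: (bar e \in A); rewrite ?andbF ?andbT // andTb; apply/esym.
  apply/negP => heA; move: hb heA; rewrite !inE /term barK.
  by case/andP => _ h1 /andP [_ h2]; move: (ltn_trans h1 h2); rewrite ltnn.
have zpos : forall e, 0 <= z e by move=> e; rewrite /z subr_ge0.
have S2 : \sum_(v | v != r) (2 * x v - 1) <= \sum_(e in A) z e.
  have -> : \sum_(e in A) z e = \sum_v \sum_(e in A | term e == v) z e.
    by apply: (partition_big term predT).
  rewrite [X in _ <= X](bigD1 r) //=.
  have h0 : 0 <= \sum_(e in A | term e == r) z e.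
    by apply: sumr_ge0 => e _; exact: zpos.
  suff : \sum_(v | v != r) (2 * x v - 1) <= \sum_(v | true && (v != r)) \sum_(e in A | term e == v) z e by lra.
  apply: ler_sum => v hv.
  have [e eT /andP [/eqP te hde]] := hd v hv.
  have eA : e \in A by rewrite inE eT te hde.
  rewrite (bigD1 e); last by rewrite eA te eqxx.
  have h2 := ey2 e eT; rewrite te in h2.
  apply: (@le_trans _ _ (z e)); first by rewrite /z; lra.
  by rewrite lerDl; apply: sumr_ge0 => i _; exact: zpos.
have hE : \sum_e z e = \sum_e y e - #|edge X|%:R.
  by rewrite /z sumrB sumr_const.
have hO := orient_sum eyb.
have Hx : \sum_v x v = x r + \sum_(v | v != r) x v by rewrite (bigD1 r) //=.
have K : x r - 1 <= \sum_(v | v != r) (2 * x v - 1) - \sum_(v | v != r) x v.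
  have -> : \sum_(v | v != r) (2 * x v - 1) - \sum_(v | v != r) x v
            = \sum_(v | v != r) (x v - 1).
    by rewrite -sumrB; apply: eq_bigr => v _; lra.
  case: (pickP (fun v => v != r)) => [v1 hv1 | hnone].
    rewrite (bigD1 v1) //=.
    have h1 : 0 <= \sum_(i | (i != r) && (i != v1)) (x i - 1).
      by apply: sumr_ge0 => i _; rewrite subr_ge0.
    have := hxr v1; lra.
  rewrite big_pred0; last by move=> v; exact: hnone.
  have : (m <= #|VG G r|)%N.
    apply: dvdn_leq; first exact: gvpos.
    apply/dvdn_biglcmP => v _.
    by have := hnone v => /= /negbFE /eqP ->.
  rewrite -(ler_nat rat) => hm.
  suff : x r <= 1 by lra.
  by rewrite /x ler_pdivrMr ?ltr0n // mul1r.
rewrite hmu; lra.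
Qed.
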